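(* Let $X$ be a robust $X$-set parameter, let $G$ and $G'$ be graphs, and let $\tilde\varphi:\mathfrak{X}(G)\to\mathfrak{X}(G')$ be a graph isomorphism. Suppose $X(K_1)=0$ or $G$ and $G'$ have no isolated vertices. Then $R'=V(G')\setminus\tilde\varphi(V(G))$ is $X$-irrelevant in $G'$, and $\varphi=\nu_{R'}\circ\tilde\varphi$ is a graph isomorphism $\mathfrak{X}(G)\to\mathfrak{X}(G')$ with $\varphi(V(G))=V(G')$ and $|\varphi(S)|=|S|$ for every $X$-set $S$ of $G$.
   Context: All graphs are finite, simple, undirected, with nonempty vertex set. A super $X$-set parameter $X$ assigns to each graph $G$ a family of subsets of $V(G)$, called the $X$-sets of $G$, such that: every graph isomorphism maps $X$-sets to $X$-sets; every graph has at least one $X$-set; and (Superset) if $S$ is an $X$-set of $G$ and $S\subseteq S'\subseteq V(G)$, then $S'$ is an $X$-set of $G$. $X(G)$ is the minimum cardinality of an $X$-set. A robust $X$-set parameter is a super $X$-set parameter that additionally satisfies: ($(n-1)$-set) if $G$ is connected of order $n\ge2$, every set of $n-1$ vertices is an $X$-set; (Component consistency) if $G_1,\dots,G_k$ are the connected components of $G$, then $S\subseteq V(G)$ is an $X$-set of $G$ iff $S\cap V(G_i)$ is an $X$-set of $G_i$ for all $i$. The $X$-TAR graph $\mathfrak{X}(G)$ has as vertices the $X$-sets of $G$, with $S_1S_2$ an edge iff $|S_1\ominus S_2|=1$. A vertex is $X$-irrelevant if it lies in no minimal (w.r.t. inclusion) $X$-set; a set is $X$-irrelevant if all its vertices are.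 For $R\subseteq V(G')$, $\nu_R(S)=S\ominus R$ (symmetric difference). *)

(* Defs.v *)
From mathcomp Require Import all_boot.
Set Implicit Arguments. Unset Strict Implicit. Unset Printing Implicit Defensive.

Definition is_graph (T : finType) (e : rel T) : Prop :=
  [/\ symmetric e, irreflexive e & 0 < #|T|].

(* A set parameter: assigns to each graph (T, e) the family of its X-sets. *)
Definition set_param := forall (T : finType), rel T -> {set T} -> bool.

Definition comp_type (T : finType) (e : rel T) (x : T) : finType :=
  {y : T | connect e x y}.

Definition comp_rel (T : finType) (e : rel T) (x : T) : rel (comp_type e x) :=
  fun u v => e (val u) (val v).

Definition comp_restr (T : finType) (e : rel T) (x : T) (S : {set T})
  : {set comp_type e x} := [set u : comp_type e x | val u \in S].

Definition super_param (X : set_param) : Prop :=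
  [/\
      (forall (T T' : finType) (e : rel T) (e' : rel T') (f : T -> T'),
         is_graph e -> is_graph e' -> bijective f ->
         (forall x y, e' (f x) (f y) = e x y) ->
         forall S, X T e S -> X T' e' (f @: S)),
      (forall (T : finType) (e : rel T), is_graph e -> exists S, X T e S) &
      (forall (T : finType) (e : rel T), is_graph e ->
         forall S S' : {set T}, S \subset S' -> X T e S -> X T e S')].

Definition connected_graph (T : finType) (e : rel T) : Prop :=
  forall x y, connect e x y.

Definition robust_param (X : set_param) : Prop :=
  [/\ super_param X,
      (forall (T : finType) (e : rel T), is_graph e -> connected_graph e ->
         2 <= #|T| -> forall S : {set T}, #|S| = #|T|.-1 -> X T e S) &
      (* component consistency (components indexed by a representative x) *)
      (forall (T : finType) (e : rel T), is_graph e -> forall S : {set T},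
         X T e S <-> (forall x : T, X (comp_type e x) (@comp_rel T e x) (comp_restr e x S)))].

Definition symdiff (T : finType) (A B : {set T}) : {set T} := (A :\: B) :|: (B :\: A).

Definition tar_adj (T : finType) (A B : {set T}) : bool := #|symdiff A B| == 1.

(* phi is a graph isomorphism X-TAR(G) -> X-TAR(G'), where phi is given as a
   function on all subsets whose behaviour on X-sets is what matters. *)
Definition tar_iso (X : set_param) (T T' : finType) (e : rel T) (e' : rel T')
  (phi : {set T} -> {set T'}) : Prop :=
  [/\ (forall S, X T e S -> X T' e' (phi S)),
      (forall S1 S2, X T e S1 -> X T e S2 -> phi S1 = phi S2 -> S1 = S2),
      (forall S', X T' e' S' -> exists2 S, X T e S & phi S = S') &
      (forall S1 S2, X T e S1 -> X T e S2 ->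
         tar_adj (phi S1) (phi S2) = tar_adj S1 S2)].

Definition irrelevant_set (X : set_param) (T : finType) (e : rel T) (R : {set T}) : Prop :=
  forall v, v \in R -> forall M : {set T}, minset (X T e) M -> v \notin M.

Definition no_isolated (T : finType) (e : rel T) : Prop :=
  forall x, exists y, e x y.

(* X(K_1) = 0: the empty set is an X-set of K_1. *)
Definition XK1_zero (X : set_param) : Prop :=
  X unit (fun _ _ => false) set0.

(* Main.v *)
Require Import Defs.
From mathcomp Require Import all_boot.
Set Implicit Arguments. Unset Strict Implicit. Unset Printing Implicit Defensive.

Lemma comp_is_graph (T : finType) (e : rel T) (x : T) :
  is_graph e -> is_graph (@comp_rel _ e x).
Proof.
case=> sy ir _; split.
- by move=> u w; rewrite /comp_rel sy.
- by move=> u; rewrite /comp_rel ir.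
- by apply/card_gt0P; exists (exist _ x (connect0 e x)).
Qed.

Lemma comp_connected (T : finType) (e : rel T) (x : T) :
  symmetric e -> connected_graph (@comp_rel _ e x).
Proof.
move=> sy.
have syc : symmetric (@comp_rel _ e x) by move=> u w; rewrite /comp_rel sy.
set x0 : comp_type e x := exist _ x (connect0 e x).
have H : forall p z (hz : connect e x z), path e z p ->
    forall u : comp_type e x, val u = last z p ->
    connect (@comp_rel _ e x) (exist _ z hz) u.
  elim=> [|y p IH] z hz /=.
    move=> _ u hu; have -> : u = exist _ z hz by apply: val_inj.
    exact: connect0.
  case/andP=> ezy py u hu.
  have hy : connect e x y := connect_trans hz (connect1 ezy).
  apply: connect_trans (IH y hy py u hu).
  by apply: connect1.
have H0 : forall u, connect (@comp_rel _ e x) x0 u.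
  move=> u; case/connectP: (valP u) => p px hl.
  exact: H px u hl.
move=> u w; apply: connect_trans (H0 w).
by rewrite (sym_connect_sym syc).
Qed.

Lemma Xfull (X : set_param) (T : finType) (e : rel T) :
  super_param X -> is_graph e -> X T e setT.
Proof.
case=> _ ex up g; have [S HS] := ex _ _ g.
exact: up _ _ g _ _ (subsetT S) HS.
Qed.

Lemma Xminus1 (X : set_param) (T : finType) (e : rel T) :
  robust_param X -> is_graph e -> (XK1_zero X \/ no_isolated e) ->
  forall v, X T e (setT :\ v).
Proof.
move=> [sp n1 cc] g hyp v.
have [sy ir _] := g.
apply/(cc _ _ g) => x.
have gx := comp_is_graph x g.
case: (boolP (connect e x v)) => hv; last first.
  have -> : comp_restr e x (setT :\ v) = setT.
    apply/setP=> u; rewrite !inE andbT.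
    by apply/eqP=> Hu; move: (valP u); rewrite Hu (negbTE hv).
  exact: Xfull.
set cv : comp_type e x := exist _ v hv.
have Hr : comp_restr e x (setT :\ v) = [set~ cv].
  by apply/setP=> u; rewrite !inE andbT -val_eqE.
rewrite Hr.
have [[y hy]|noy] : (exists y, e v y) \/ (forall y, ~~ e v y).
    case: hyp => [_|ni]; last by left; apply: ni.
    case: (pickP (e v)) => [y hy|h]; first by left; exists y.
    by right=> y; rewrite h.
  set cy : comp_type e x := exist _ y (connect_trans hv (connect1 hy)).
  apply: n1 => //; first exact: comp_connected.
    have ne : cv != cy.
      by rewrite -val_eqE /=; apply/eqP=> E; move: (hy); rewrite E ir.
    have := cards2 cv cy; rewrite ne => <-; exact: max_card.
  by rewrite cardsC1.
case: hyp => [k1|ni]; last by case: (ni v) => y hy; move: (noy y); rewrite hy.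
have all_cv : forall u : comp_type e x, u = cv.
  move=> u; apply: val_inj => /=.
  have : connect e v (val u).
    apply: connect_trans (valP u).
    by rewrite (sym_connect_sym sy).
  case/connectP=> [[|z p]] /= => [_ ->//|].
  by case/andP=> ez; move: (noy z); rewrite ez.
have -> : [set~ cv] = set0.
  by apply/setP=> u; rewrite !inE (all_cv u) eqxx.
have -> : (set0 : {set comp_type e x}) = (fun _ : unit => cv) @: set0 by rewrite imset0.
case: sp => iso _ _.
apply: (iso unit _ (fun _ _ => false)) => //.
- by split=> //; rewrite card_unit.
- by exists (fun _ => tt) => [[]|u] //; rewrite (all_cv u).
- by move=> a b; rewrite /comp_rel ir.
Qed.

Ltac sd := apply/setP=> ?; rewrite /symdiff !inE.

Lemma sdK (T : finType) (A B : {set T}) : symdiff A (symdiff A B) = B.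
Proof. by sd; do 2 case: (_ \in _). Qed.

Lemma sdC (T : finType) (A B : {set T}) : symdiff A B = symdiff B A.
Proof. by sd; do 2 case: (_ \in _). Qed.

Lemma sdA (T : finType) (A B C : {set T}) :
  symdiff (symdiff A B) C = symdiff A (symdiff B C).
Proof. by sd; do 3 case: (_ \in _). Qed.

Lemma sd0 (T : finType) (A : {set T}) : symdiff A set0 = A.
Proof. by sd; case: (_ \in _). Qed.

Lemma adj_fun (T T' : finType) (Y : {set T}) (f : T' -> {set T}) :
  (forall x, tar_adj Y (f x)) -> {h : T' -> T | forall x, f x = symdiff Y [set h x]}.
Proof.
move=> H.
have ex : forall x, exists a, f x == symdiff Y [set a].
  move=> x; have /cards1P [a Ha] := H x.
  by exists a; rewrite -Ha sdK.
exists (fun x => xchoose (ex x)) => x.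
exact/eqP/(xchooseP (ex x)).
Qed.

Lemma adj_add (T : finType) (S : {set T}) v : v \notin S -> tar_adj S (v |: S).
Proof.
move=> hv; rewrite /tar_adj.
have -> : symdiff S (v |: S) = [set v].
  by sd; case: eqP => [->|]; rewrite ?(negbTE hv) //; case: (_ \in S).
by rewrite cards1.
Qed.

Lemma sd1_card (T : finType) (D : {set T}) a :
  #|symdiff [set a] D| = 1 -> (a \in D) && (#|D| == 2) || (D == set0).
Proof.
case: (boolP (a \in D)) => ha.
  have -> : symdiff [set a] D = D :\ a.
    by sd; case: eqP => [->|]; rewrite ?ha //; case: (_ \in D).
  by move=> h; rewrite (cardsD1 a D) ha h.
have -> : symdiff [set a] D = a |: D.
  by sd; case: eqP => [->|]; rewrite ?(negbTE ha) //; case: (_ \in D).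
rewrite cardsU1 ha /= => -[] /eqP; by rewrite cards_eq0 => ->.
Qed.

Lemma two_adj (T : finType) (Z P : {set T}) a b : a != b ->
  tar_adj (symdiff Z [set a]) P -> tar_adj (symdiff Z [set b]) P ->
  P = Z \/ P = symdiff Z [set a; b].
Proof.
move=> ab; rewrite /tar_adj.
set D := symdiff Z P.
have E : forall c, symdiff (symdiff Z [set c]) P = symdiff [set c] D.
  by move=> c; sd; do 2 case: (_ \in _); case: (_ == _).
rewrite !E => /eqP /sd1_card ha /eqP /sd1_card hb.
have -> : P = symdiff Z D by rewrite sdK.
case/orP: ha => [/andP [ha h2]|/eqP ->]; last by left; rewrite sd0.
case/orP: hb => [/andP [hb _]|/eqP D0]; last by move: ha; rewrite D0 inE.
right; congr symdiff; apply/esym/eqP; rewrite eqEcard (eqP h2) cards2 ab andbT.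
by rewrite subUset !sub1set ha hb.
Qed.

Lemma adj_del (T : finType) (S : {set T}) v : v \notin S -> tar_adj (v |: S) S.
Proof. by move=> h; rewrite /tar_adj sdC; apply: adj_add. Qed.

Lemma sdKr (T : finType) (A R : {set T}) : symdiff (symdiff A R) R = A.
Proof. by sd; do 2 case: (_ \in _). Qed.

Lemma sdRR (T : finType) (A B R : {set T}) :
  symdiff (symdiff A R) (symdiff B R) = symdiff A B.
Proof. by sd; do 3 case: (_ \in _). Qed.

Lemma cardC_add (T : finType) (S : {set T}) v : v \notin S ->
  #|~: S| = (#|~: (v |: S)|).+1.
Proof.
move=> h; have E : ~: S :\ v = ~: (v |: S).
  by apply/setP=> z; rewrite !inE negb_or andbC.
by rewrite (cardsD1 v (~: S)) inE h add1n E.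
Qed.

Theorem theorem2p24 (X : set_param) (T T' : finType) (e : rel T) (e' : rel T')
  (phit : {set T} -> {set T'}) :
  robust_param X -> is_graph e -> is_graph e' ->
  tar_iso X e e' phit ->
  (XK1_zero X \/ (no_isolated e /\ no_isolated e')) ->
  let R' := ~: phit [set: T] in
  irrelevant_set X e' R' /\
  (let phi := fun S => symdiff (phit S) R' in
   [/\ tar_iso X e e' phi,
       phi [set: T] = [set: T'] &
       forall S, X T e S -> #|phi S| = #|S|]).
Proof.
move=> rob gr gr' [mapF injF surjF adjF] hyp R'.
have rob' := rob; case: rob' => sp _ _.
have sp' := sp; case: sp' => _ _ up.
have upF := up _ _ gr; have upF' := up _ _ gr'.
have FT := Xfull sp gr; have FT' := Xfull sp gr'.
have F1 : forall v, X T e (setT :\ v).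
  by apply: Xminus1 => //; case: hyp => [?|[? ?]]; [left|right].
have F1' : forall v, X T' e' (setT :\ v).
  by apply: Xminus1 => //; case: hyp => [?|[? ?]]; [left|right].
set W := phit setT.
have adjW : forall v, tar_adj W (phit (setT :\ v)).
  move=> v; rewrite /W adjF //.
  have {1}-> : (setT : {set T}) = v |: (setT :\ v) by rewrite setD1K.
  by apply: adj_del; rewrite !inE eqxx.
have [g Hg] := adj_fun adjW.
have ginj : injective g.
  move=> v w E.
  have : setT :\ v = setT :\ w :> {set T} by apply: injF; rewrite ?Hg ?E.
  by move/setP/(_ v); rewrite !inE eqxx /=; by case: eqP.
have c1 : #|T| <= #|T'| by apply: leq_card ginj.
have [S0 XS0 HS0] := surjF _ FT'.
have exS : forall x, exists S, X T e S && (phit S == setT :\ x).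
  by move=> x; have [S XS HS] := surjF _ (F1' x); exists S; rewrite XS HS eqxx.
pose psi x := xchoose (exS x).
have psiP : forall x, X T e (psi x) /\ phit (psi x) = setT :\ x.
  by move=> x; have /andP [a /eqP b] := xchooseP (exS x).
have adj0 : forall x, tar_adj S0 (psi x).
  move=> x; have [a b] := psiP x; rewrite -adjF // HS0 b.
  have {1}-> : (setT : {set T'}) = x |: (setT :\ x) by rewrite setD1K.
  by apply: adj_del; rewrite !inE eqxx.
have [h Hh] := adj_fun adj0.
have hinj : injective h.
  move=> x y E.
  have : setT :\ x = setT :\ y :> {set T'}.
    by rewrite -(psiP x).2 -(psiP y).2 Hh E -Hh.
  by move/setP/(_ x); rewrite !inE eqxx /=; by case: eqP.
have c2 : #|T'| <= #|T| by apply: leq_card hinj.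
have [ginv gK gKi] := inj_card_bij ginj c2.
have eqg : forall z v, (z == g v) = (ginv z == v).
  move=> z v; apply/eqP/eqP => [->|<-]; by rewrite ?gK ?gKi.
pose K (S : {set T}) := [set y | ginv y \notin S].
have formula : forall k S, #|~: S| <= k -> X T e S -> phit S = symdiff W (K S).
  elim=> [|k IH] S.
    rewrite leqn0 cards_eq0 => /eqP S0' _.
    have -> : S = setT by rewrite -[S]setCK S0' setC0.
    suff -> : K setT = set0 by rewrite sd0.
    by apply/setP=> y; rewrite !inE.
  move=> hk XS; case: (leqP #|~: S| k) => [hk'|hgt]; first exact: IH.
  have cS : #|~: S| = k.+1 by apply/eqP; rewrite eqn_leq hk hgt.
  have [v hv] : exists v, v \in ~: S by apply/set0Pn; rewrite -card_gt0 cS.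
  have hvS : v \notin S by move: hv; rewrite inE.
  have c1v := cardC_add hvS.
  case: k IH hk hgt cS => [|k] IH hk hgt cS.
    have ES : S = setT :\ v.
      apply/setP=> z; rewrite !inE andbT.
      case: (z =P v) => [->|nz]; first by rewrite (negbTE hvS).
      apply/negPn/negP=> nzS.
      have : #|~: (v |: S)| == 0 by rewrite -eqSS -c1v cS.
      rewrite cards_eq0 => /eqP/setP/(_ z); rewrite !inE negb_or nzS andbT.
      by case: eqP.
    rewrite ES Hg; congr symdiff; apply/setP=> y.
    by rewrite !inE eqg andbT negbK.
  have [w hw] : exists w, w \in ~: (v |: S).
    by apply/set0Pn; rewrite -card_gt0 -ltnS -c1v cS.
  have hwS : w \notin v |: S by move: hw; rewrite inE.
  have hwv : w != v by move: hwS; rewrite !inE negb_or => /andP [].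
  have hwS' : w \notin S by move: hwS; rewrite !inE negb_or => /andP [].
  have X1 : X T e (v |: S) by apply: upF XS; apply: subsetUr.
  have X2 : X T e (w |: S) by apply: upF XS; apply: subsetUr.
  have X12 : X T e (w |: (v |: S)) by apply: upF X1; apply: subsetUr.
  have c2w := cardC_add hwS'.
  have c12 := cardC_add hwS.
  have E1 : phit (v |: S) = symdiff (symdiff W (K S)) [set g v].
    rewrite (IH (v |: S)) //; last by rewrite -ltnS -c1v cS.
    rewrite sdA; congr symdiff; apply/setP=> y; rewrite !inE eqg.
    move: (ginv y) => u; case: (u =P v) => [->|_]; rewrite ?(negbTE hvS) //.
    by case: (u \in S).
  have E2 : phit (w |: S) = symdiff (symdiff W (K S)) [set g w].
    rewrite (IH (w |: S)) //; last by rewrite -ltnS -c2w cS.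
    rewrite sdA; congr symdiff; apply/setP=> y; rewrite !inE eqg.
    move: (ginv y) => u; case: (u =P w) => [->|_]; rewrite ?(negbTE hwS') //.
    by case: (u \in S).
  have E12 : phit (w |: (v |: S)) = symdiff (symdiff W (K S)) [set g v; g w].
    rewrite (IH (w |: (v |: S))) //; last by rewrite -ltnS -ltnS -c12 -c1v cS.
    rewrite sdA; congr symdiff; apply/setP=> y; rewrite !inE !eqg.
    move: (ginv y) => u; case: (u =P v) => [->|_]; rewrite ?(negbTE hvS) ?(negbTE hwv) //.
      by rewrite eq_sym (negbTE hwv).
    case: (u =P w) => [->|_]; rewrite ?(negbTE hwS') //.
    by case: (u \in S).
  have A1 : tar_adj (symdiff (symdiff W (K S)) [set g v]) (phit S).
    by rewrite -E1 adjF //; apply: adj_del.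
  have A2 : tar_adj (symdiff (symdiff W (K S)) [set g w]) (phit S).
    by rewrite -E2 adjF //; apply: adj_del.
  have gvw : g v != g w by apply/eqP=> /ginj E; move: hwv; rewrite E eqxx.
  case: (two_adj gvw A1 A2) => // E.
  have : S = w |: (v |: S) by apply: injF; rewrite // E12 E.
  by move/setP/(_ v); rewrite !inE eqxx orbT (negbTE hvS).
have formula' : forall S, X T e S -> phit S = symdiff W (K S).
  by move=> S; apply: formula.
have interW : forall S, X T e S -> X T' e' (phit S :&: W).
  move=> S XS.
  have XS' : X T e (S :|: [set v | g v \notin W]) by apply: upF XS; apply: subsetUl.
  suff <- : phit (S :|: [set v | g v \notin W]) = phit S :&: W by apply: mapF.
  rewrite !formula' //; apply/setP=> y; rewrite /symdiff !inE gKi.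
  by case: (y \in W); case: (ginv y \in S).
have phiX : forall S, X T e S -> X T' e' (symdiff (phit S) R').
  move=> S XS; apply: upF' (interW _ XS).
  by apply/subsetP=> y; rewrite /symdiff /R' -/W !inE => /andP [-> ->].
have phiinj : forall S1 S2, X T e S1 -> X T e S2 ->
    symdiff (phit S1) R' = symdiff (phit S2) R' -> S1 = S2.
  move=> S1 S2 X1 X2 E; apply: injF => //.
  by rewrite -(sdKr (phit S1) R') E sdKr.
have phiS : forall S, X T e S -> symdiff (phit S) R' = g @: S.
  move=> S XS; rewrite formula' //; apply/setP=> y.
  rewrite /symdiff /R' -/W !inE.
  have -> : (y \in g @: S) = (ginv y \in S).
    apply/imsetP/idP => [[x hx ->]|hy]; first by rewrite gK.
    by exists (ginv y); rewrite ?gKi.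
  by case: (y \in W); case: (ginv y \in S).
split.
  move=> v hv M /minsetP [XM minM].
  have [S XS HS] := surjF _ XM.
  have := minM _ (interW _ XS); rewrite HS subsetIl => /(_ erefl) E.
  apply/negP; rewrite -E inE => /andP [_ hW].
  by move: hv; rewrite /R' -/W inE hW.
move=> phi; split.
- split.
  + exact: phiX.
  + exact: phiinj.
  + move=> S' XS'.
    pose FS := [set S : {set T} | X T e S].
    pose FS' := [set S : {set T'} | X T' e' S].
    have e1 : phit @: FS = FS'.
      apply/setP=> A; rewrite [in RHS]inE; apply/imsetP/idP.
        by case=> S; rewrite inE => XS ->; apply: mapF.
      by move=> XA; have [S XS <-] := surjF _ XA; exists S; rewrite ?inE.
    have c3 : #|phit @: FS| = #|FS|.
      by apply: card_in_imset => A B; rewrite !inE; apply: injF.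
    have c4 : #|phi @: FS| = #|FS|.
      by apply: card_in_imset => A B; rewrite !inE; apply: phiinj.
    have sub : phi @: FS \subset FS'.
      by apply/subsetP=> A /imsetP [S]; rewrite inE => XS ->; rewrite inE phiX.
    have : phi @: FS == FS'.
 by rewrite eqEcard sub /= -e1 c3 c4.
    move/eqP=> E; have : S' \in phi @: FS by rewrite E inE.
    by case/imsetP=> S; rewrite inE => XS ->; exists S.
  + by move=> S1 S2 X1 X2; rewrite -adjF // /tar_adj /phi sdRR.
- by apply/setP=> y; rewrite /phi /symdiff /R' -/W !inE; case: (y \in W).
- by move=> S XS; rewrite /phi phiS // card_imset.
Qed.
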